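(* Let $A$ be a closed linear operator in a sequentially complete locally convex space $E$. Let $(\lambda_n)_{n\in\mathbb N}$ be a sequence in the resolvent set $\rho(A)$ with $\lim_{n\to\infty}|\lambda_n|=\infty$, and suppose there exist $C>0$ and $k\ge -1$ such that for every $p\in\circledast$ there exists $q\in\circledast$ with $$p(R(\lambda_n:A)x)\le C|\lambda_n|^k q(x)\quad\text{for all }x\in E,\ n\in\mathbb N.$$ Then $A$ is stationary dense and $n(A)\le k+2$.
   Context: $E$ is a Hausdorff sequentially complete locally convex space whose topology is given by a family $\circledast$ of continuous seminorms. $\rho(A)$ is the set of $\lambda\in\mathbb C$ for which $\lambda-A:D(A)\to E$ is bijective with continuous inverse $R(\lambda:A)=(\lambda-A)^{-1}$. $A$ is called stationary dense if $n(A):=\inf\{k\in\mathbb N_0:\ D(A^m)\subseteq\overline{D(A^{m+1})}\ \text{for all } m\ge k\}<\infty$. *)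

(* Defs.v *)
From Stdlib Require Import Reals List.
Open Scope R_scope.

Record Cx := mkC { Cre : R; Cim : R }.
Definition C0 : Cx := mkC 0 0.
Definition C1 : Cx := mkC 1 0.
Definition Cadd (a b : Cx) : Cx := mkC (Cre a + Cre b) (Cim a + Cim b).
Definition Cmul (a b : Cx) : Cx :=
  mkC (Cre a * Cre b - Cim a * Cim b) (Cre a * Cim b + Cim a * Cre b).
Definition Cnorm (a : Cx) : R := sqrt (Cre a ^ 2 + Cim a ^ 2).

Record LCS := {
  V :> Type;
  vadd : V -> V -> V;
  vzero : V;
  vopp : V -> V;
  vscal : Cx -> V -> V;
  vaddA : forall x y z, vadd x (vadd y z) = vadd (vadd x y) z;
  vaddC : forall x y, vadd x y = vadd y x;
  vadd0 : forall x, vadd x vzero = x;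
  vaddN : forall x, vadd x (vopp x) = vzero;
  vscalA : forall a b x, vscal a (vscal b x) = vscal (Cmul a b) x;
  vscal1 : forall x, vscal C1 x = x;
  vscalDr : forall a x y, vscal a (vadd x y) = vadd (vscal a x) (vscal a y);
  vscalDl : forall a b x, vscal (Cadd a b) x = vadd (vscal a x) (vscal b x);
  SI : Type;
  sn : SI -> V -> R;
  sn_triangle : forall i x y, sn i (vadd x y) <= sn i x + sn i y;
  sn_homog : forall i a x, sn i (vscal a x) = Cnorm a * sn i x;
  hausdorff : forall x, (forall i, sn i x = 0) -> x = vzero;
  seq_complete : forall u : nat -> V,
    (forall i eps, 0 < eps -> exists N, forall n m, (N <= n)%nat -> (N <= m)%nat ->
        sn i (vadd (u n) (vopp (u m))) < eps) ->
    exists x, forall i eps, 0 < eps -> exists N, forall n, (N <= n)%nat ->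
        sn i (vadd (u n) (vopp x)) < eps
}.

Arguments vadd {_}. Arguments vzero {_}. Arguments vopp {_}.
Arguments vscal {_}. Arguments sn {_}.

Section Ops.
Variable E : LCS.

Definition vsub (x y : E) : E := vadd x (vopp y).

Definition in_closure (S : E -> Prop) (x : E) : Prop :=
  forall (L : list (SI E)) (eps : R), 0 < eps ->
    exists y, S y /\ forall i, In i L -> sn i (vsub x y) < eps.

Definition continuous_map (f : E -> E) : Prop :=
  forall (x : E) (i : SI E) (eps : R), 0 < eps ->
    exists (L : list (SI E)) (delta : R), 0 < delta /\
      forall y, (forall j, In j L -> sn j (vsub y x) < delta) ->
        sn i (vsub (f y) (f x)) < eps.

Definition linear_op (D : E -> Prop) (A : E -> E) : Prop :=
  D vzero /\
  (forall x y, D x -> D y -> D (vadd x y) /\ A (vadd x y) = vadd (A x) (A y)) /\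
  (forall a x, D x -> D (vscal a x) /\ A (vscal a x) = vscal a (A x)).

(** Closed operator: the graph is closed in E x E. *)
Definition closed_op (D : E -> Prop) (A : E -> E) : Prop :=
  forall x y : E,
    (forall (L : list (SI E)) (eps : R), 0 < eps ->
       exists z, D z /\ forall i, In i L ->
         sn i (vsub x z) < eps /\ sn i (vsub y (A z)) < eps) ->
    D x /\ A x = y.

Definition shift_op (A : E -> E) (lam : Cx) (x : E) : E := vsub (vscal lam x) (A x).

Definition is_resolvent (D : E -> Prop) (A : E -> E) (lam : Cx) (Rl : E -> E) : Prop :=
  (forall y, D (Rl y) /\ shift_op A lam (Rl y) = y) /\
  (forall x, D x -> Rl (shift_op A lam x) = x).

Definition in_resolvent_set (D : E -> Prop) (A : E -> E) (lam : Cx) : Prop :=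
  exists Rl, is_resolvent D A lam Rl /\ continuous_map Rl.

Fixpoint dom_pow (D : E -> Prop) (A : E -> E) (m : nat) : E -> Prop :=
  match m with
  | O => fun _ => True
  | S m' => fun x => D x /\ dom_pow D A m' (A x)
  end.

(** the defining property of the set whose infimum is n(A) *)
Definition stat_index (D : E -> Prop) (A : E -> E) (k : nat) : Prop :=
  forall m, (k <= m)%nat ->
    forall x, dom_pow D A m x -> in_closure (dom_pow D A (S m)) x.

Definition stationary_dense (D : E -> Prop) (A : E -> E) : Prop :=
  exists k, stat_index D A k.

(** n(A) <= r  (n(A) = inf {k | stat_index k}; the set is upward closed) *)
Definition n_le (D : E -> Prop) (A : E -> E) (r : R) : Prop :=
  exists k, stat_index D A k /\ INR k <= r.

End Ops.

(* Main.v *)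
Require Import Defs.
From Stdlib Require Import Reals ZArith Lra Lia List.
Open Scope R_scope.

Definition Cm1 : Cx := mkC (-1) 0.
Definition Cinv (a : Cx) : Cx :=
  mkC (Cre a / (Cre a ^ 2 + Cim a ^ 2)) (- Cim a / (Cre a ^ 2 + Cim a ^ 2)).

Lemma Cnorm_mul a b : Cnorm (Cmul a b) = Cnorm a * Cnorm b.
Proof.
  unfold Cnorm. rewrite <- sqrt_mult by nra. f_equal. destruct a, b; simpl. ring.
Qed.

Lemma Cnorm_Cm1 : Cnorm Cm1 = 1.
Proof. unfold Cnorm, Cm1; cbn [Cre Cim]. replace ((-1)^2 + 0^2) with 1 by ring. apply sqrt_1. Qed.

Lemma Cnorm_C1 : Cnorm Defs.C1 = 1.
Proof. unfold Cnorm, Defs.C1; cbn [Cre Cim]. replace (1^2 + 0^2) with 1 by ring. apply sqrt_1. Qed.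

Lemma Cinv_mul a : 0 < Cnorm a -> Cmul (Cinv a) a = Defs.C1.
Proof.
  intro H. assert (Hn : Cre a ^ 2 + Cim a ^ 2 <> 0).
  { intro E0. unfold Cnorm in H. rewrite E0, sqrt_0 in H. lra. }
  destruct a as [x y]; unfold Cinv, Cmul, Defs.C1; simpl in *. f_equal; field; contradict Hn; lra.
Qed.

Lemma Cnorm_inv a : 0 < Cnorm a -> Cnorm (Cinv a) = / Cnorm a.
Proof.
  intro H. assert (E1 := f_equal Cnorm (Cinv_mul a H)).
  rewrite Cnorm_mul, Cnorm_C1 in E1. field_simplify_eq; [|lra]. lra.
Qed.

Section G.
Variable E : LCS.

Lemma add0l (x : E) : vadd vzero x = x.
Proof. rewrite vaddC; apply vadd0. Qed.

Lemma add_cancel_l (a b c : E) : vadd a b = vadd a c -> b = c.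
Proof.
  intro H. rewrite <- (add0l b), <- (add0l c), <- (vaddN _ a), (vaddC _ a).
  rewrite <- !vaddA, H. reflexivity.
Qed.

Lemma scal0 (x : E) : vscal Defs.C0 x = vzero.
Proof.
  assert (H : vscal Defs.C0 x = vadd (vscal Defs.C0 x) (vscal Defs.C0 x)).
  { rewrite <- (vscalDl E). f_equal. unfold Cadd, Defs.C0; simpl; f_equal; ring. }
  symmetry. apply (add_cancel_l (vscal Defs.C0 x)). rewrite vadd0. exact H.
Qed.

Lemma opp_scal (x : E) : vopp x = vscal Cm1 x.
Proof.
  apply (add_cancel_l x). rewrite vaddN. rewrite <- (vscal1 _ x) at 1.
  rewrite <- (vscalDl E). rewrite <- (scal0 x). f_equal. unfold Cadd, Defs.C1, Cm1, Defs.C0; simpl; f_equal; ring.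
Qed.

Lemma opp_add (a b : E) : vopp (vadd a b) = vadd (vopp a) (vopp b).
Proof. rewrite !opp_scal. apply vscalDr. Qed.

Lemma opp_opp (a : E) : vopp (vopp a) = a.
Proof.
  rewrite !opp_scal, vscalA. rewrite <- (vscal1 _ a) at 2. f_equal.
  unfold Cmul, Cm1, Defs.C1; simpl; f_equal; ring.
Qed.

Lemma sn_opp i (x : E) : sn i (vopp x) = sn i x.
Proof. rewrite opp_scal, sn_homog, Cnorm_Cm1. ring. Qed.

Lemma sn_nonneg i (x : E) : 0 <= sn i x.
Proof.
  assert (H := sn_triangle _ i x (vopp x)). rewrite vaddN, sn_opp in H.
  assert (H0 : sn i (@vzero E) = 0).
  { rewrite <- (scal0 vzero), sn_homog. unfold Cnorm, Defs.C0; cbn [Cre Cim].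
    replace (0^2+0^2) with 0 by ring. rewrite sqrt_0. ring. }
  lra.
Qed.

Lemma add_sub (z s : E) : vadd z (vsub E s z) = s.
Proof. unfold vsub. rewrite vaddC, <- vaddA, (vaddC _ (vopp z)), vaddN, vadd0. reflexivity. Qed.

Lemma sub_eq (s a z : E) : vadd s (vopp a) = z -> a = vadd s (vopp z).
Proof. intro H. rewrite <- H, opp_add, opp_opp, vaddA, vaddN, add0l. reflexivity. Qed.

Lemma sub_swap (x s : E) : vsub E x s = vopp (vsub E s x).
Proof. unfold vsub. rewrite opp_add, opp_opp, vaddC. reflexivity. Qed.

End G.

Section Op.
Variable E : LCS.
Variable D : E -> Prop.
Variable A : E -> E.
Hypothesis HAlin : linear_op E D A.

Lemma lin_add x y : D x -> D y -> D (vadd x y) /\ A (vadd x y) = vadd (A x) (A y).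
Proof. destruct HAlin as [_ [H _]]. auto. Qed.
Lemma lin_scal a x : D x -> D (vscal a x) /\ A (vscal a x) = vscal a (A x).
Proof. destruct HAlin as [_ [_ H]]. auto. Qed.
Lemma lin_opp x : D x -> D (vopp x) /\ A (vopp x) = vopp (A x).
Proof. rewrite !opp_scal. apply lin_scal. Qed.

Lemma dom_scal m : forall a y, dom_pow E D A m y -> dom_pow E D A m (vscal a y).
Proof.
  induction m; intros a y H; simpl in *; auto.
  destruct H as [H1 H2]. destruct (lin_scal a y H1) as [H3 H4]. rewrite H4. auto.
Qed.

Lemma dom_le a : forall b x, dom_pow E D A (a + b) x -> dom_pow E D A a x.
Proof.
  induction a; intros b x H; simpl in *; auto. destruct H; split; eauto.
Qed.

Variable lam : Cx.
Variable Rl : E -> E.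
Hypothesis Hres : is_resolvent E D A lam Rl.

Lemma AR z : A (Rl z) = vsub E (vscal lam (Rl z)) z.
Proof.
  destruct Hres as [H1 _]. destruct (H1 z) as [_ Hw]. unfold shift_op, vsub in *.
  apply sub_eq. exact Hw.
Qed.

Lemma RA z : D z -> Rl (A z) = A (Rl z).
Proof.
  intro Dz. destruct Hres as [H1 H2]. destruct (H1 z) as [Dw Hw].
  assert (eAw := AR z).
  remember (Rl z) as w eqn:Ew.
  assert (DAw : D (A w)).
  { rewrite eAw. unfold vsub. apply lin_add.
    - apply lin_scal; auto.
    - apply lin_opp; auto. }
  rewrite <- (H2 (A w) DAw). f_equal.
  unfold shift_op, vsub in Hw. rewrite <- Hw.
  destruct (lin_scal lam w Dw) as [Ds As].
  destruct (lin_opp (A w) DAw) as [Do Ao].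
  destruct (lin_add _ _ Ds Do) as [_ Aa]. rewrite Aa, As, Ao. reflexivity.
Qed.

Lemma Rdom m : forall x, dom_pow E D A m x -> dom_pow E D A (S m) (Rl x).
Proof.
  destruct Hres as [H1 _].
  induction m; intros x Hx; simpl in *.
  - split; [apply H1|auto].
  - destruct Hx as [Dx Hx]. split; [apply H1|]. rewrite <- (RA x Dx).
    apply IHm. exact Hx.
Qed.

Hypothesis Hpos : 1 <= Cnorm lam.

Lemma sn_scal_inv p (y : E) : sn p y = / Cnorm lam * sn p (vscal lam y).
Proof.
  assert (H0 : 0 < Cnorm lam) by lra.
  rewrite <- (vscal1 _ y) at 1. rewrite <- (Cinv_mul lam H0), <- vscalA, sn_homog, Cnorm_inv; auto.
Qed.

Lemma step p z : D z -> sn p (Rl z) <= / Cnorm lam * (sn p z + sn p (Rl (A z))).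
Proof.
  intro Dz. rewrite sn_scal_inv. apply Rmult_le_compat_l.
  - left; apply Rinv_0_lt_compat; lra.
  - rewrite (RA z Dz), AR. rewrite <- (add_sub E z (vscal lam (Rl z))) at 1. apply sn_triangle.
Qed.

Fixpoint pw (j : nat) (z : E) : E := match j with O => z | S j' => pw j' (A z) end.
Fixpoint Tb (p : SI E) (j : nat) (z : E) : R :=
  match j with O => 0 | S j' => sn p z + Tb p j' (A z) end.

Lemma Tb_nonneg p j : forall z, 0 <= Tb p j z.
Proof. induction j; intro z; simpl. lra. pose proof (sn_nonneg E p z); pose proof (IHj (A z)); lra. Qed.

Lemma iter_bound p j : forall z, dom_pow E D A j z ->
  sn p (Rl z) <= / Cnorm lam * Tb p j z + (/ Cnorm lam) ^ j * sn p (Rl (pw j z)).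
Proof.
  induction j; intros z Hz; simpl.
  - lra.
  - destruct Hz as [Dz Hz].
    pose proof (step p z Dz) as H1. pose proof (IHj (A z) Hz) as H2.
    set (u := / Cnorm lam) in *.
    assert (Hu0 : 0 < u) by (apply Rinv_0_lt_compat; lra).
    assert (Hu1 : u <= 1). { unfold u. rewrite <- Rinv_1. apply Rinv_le_contravar; lra. }
    pose proof (Tb_nonneg p j (A z)).
    assert (u * (u * Tb p j (A z)) <= u * Tb p j (A z)).
    { apply Rmult_le_compat_l; [lra|]. rewrite <- (Rmult_1_l (Tb p j (A z))) at 2.
      apply Rmult_le_compat_r; lra. }
    nra.
Qed.
End Op.

Lemma decay a d : a < 0 -> 0 < d -> exists M, 0 < M /\ forall t, M < t -> Rpower t a < d.
Proof.
  intros Ha Hd. exists (exp (ln d / a)). split; [apply exp_pos|].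
  intros t Ht. assert (Ht0 : 0 < t) by (pose proof (exp_pos (ln d / a)); lra).
  assert (H1 : ln d / a < ln t).
  { rewrite <- (ln_exp (ln d / a)). apply ln_increasing; auto. apply exp_pos. }
  assert (H2 : a * ln t < ln d).
  { replace (ln d) with (a * (ln d / a)) by (field; lra). nra. }
  unfold Rpower. rewrite <- (exp_ln d Hd). apply exp_increasing. exact H2.
Qed.

Lemma pow_rpower t j k : 0 < t -> (/ t) ^ j * Rpower t k = Rpower t (k - INR j).
Proof.
  intro Ht. unfold Rminus. rewrite Rpower_plus, Rpower_Ropp, Rpower_pow by auto.
  rewrite pow_inv. ring.
Qed.

Theorem lemma2p4 (E : LCS) (D : E -> Prop) (A : E -> E)
  (HAlin : linear_op E D A) (HAcl : closed_op E D A)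
  (lam : nat -> Cx) (Hrho : forall n, in_resolvent_set E D A (lam n))
  (Hinf : forall M : R, exists N, forall n, (N <= n)%nat -> M < Cnorm (lam n))
  (C k : R) (HC : 0 < C) (Hk : -1 <= k)
  (Hest : forall p : SI E, exists q : SI E,
     forall (n : nat) (Rn : E -> E), is_resolvent E D A (lam n) Rn ->
       forall x : E, sn p (Rn x) <= C * Rpower (Cnorm (lam n)) k * sn q x) :
  stationary_dense E D A /\ n_le E D A (k + 2).
Proof.
  destruct (archimed k) as [Hu1 Hu2].
  assert (Hup : (0 <= up k)%Z).
  { assert (-1 < IZR (up k)) by lra. apply lt_IZR in H. lia. }
  set (J := Z.to_nat (up k)).
  assert (HJ : INR J = IZR (up k)).
  { unfold J. rewrite INR_IZR_INZ, Z2Nat.id; auto. }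
  assert (HS : stat_index E D A (S J)).
  { intros m Hm x Hx L eps Heps.
    assert (Hx1 : dom_pow E D A (S J) x).
    { apply (dom_le E D A (S J) (m - S J)). replace (S J + (m - S J))%nat with m by lia. exact Hx. }
    destruct Hx1 as [Dx HAx].
    assert (Single : forall i, exists N, forall n, (N <= n)%nat -> forall Rn,
       is_resolvent E D A (lam n) Rn -> sn i (vsub E x (vscal (lam n) (Rn x))) < eps).
    { intro i. destruct (Hest i) as [q Hq].
      set (a := Tb E A i J (A x)).
      set (b := C * sn q (pw E A J (A x))).
      assert (Ha : 0 <= a) by apply Tb_nonneg.
      assert (Hb : 0 <= b) by (pose proof (sn_nonneg E q (pw E A J (A x))); unfold b; nra).
      destruct (decay (k - INR J) (eps / 2 / (b + 1))) as [M1 [HM1 HM1']].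
      { lra. } { apply Rdiv_lt_0_compat; lra. }
      destruct (Hinf (Rmax 1 (Rmax M1 (2 * a / eps)))) as [N HN].
      exists N. intros n Hn Rn HR.
      specialize (HN n Hn). set (t := Cnorm (lam n)) in *.
      assert (Ht1 : 1 < t) by (pose proof (Rmax_l 1 (Rmax M1 (2 * a / eps))); lra).
      assert (HtM1 : M1 < t) by (pose proof (Rmax_r 1 (Rmax M1 (2 * a / eps))); pose proof (Rmax_l M1 (2 * a / eps)); lra).
      assert (HtM2 : 2 * a / eps < t) by (pose proof (Rmax_r 1 (Rmax M1 (2 * a / eps))); pose proof (Rmax_r M1 (2 * a / eps)); lra).
      rewrite sub_swap, sn_opp, <- (AR E D A (lam n) Rn HR x), <- (RA E D A HAlin (lam n) Rn HR x Dx).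
      pose proof (iter_bound E D A HAlin (lam n) Rn HR ltac:(fold t; lra) i J (A x) HAx) as B1.
      fold t a in B1.
      pose proof (Hq n Rn HR (pw E A J (A x))) as B2. fold t in B2.
      assert (B3 : (/ t) ^ J * sn i (Rn (pw E A J (A x))) <= Rpower t (k - INR J) * b).
      { rewrite <- pow_rpower by lra. unfold b.
        assert (0 <= (/ t) ^ J) by (apply pow_le; left; apply Rinv_0_lt_compat; lra).
        replace ((/ t) ^ J * Rpower t k * (C * sn q (pw E A J (A x)))) with
          ((/ t) ^ J * (C * Rpower t k * sn q (pw E A J (A x)))) by ring.
        apply Rmult_le_compat_l; auto. }
      assert (B4 : / t * a < eps / 2).
      { apply (Rmult_lt_reg_l t); [lra|]. rewrite <- Rmult_assoc, Rinv_r by lra.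
        apply (Rmult_lt_reg_r (2 / eps)). apply Rdiv_lt_0_compat; lra.
        replace (t * (eps / 2) * (2 / eps)) with t by (field; lra).
        replace (1 * a * (2 / eps)) with (2 * a / eps) by (field; lra). lra. }
      assert (B5 : Rpower t (k - INR J) * b < eps / 2).
      { specialize (HM1' t HtM1).
        assert (0 < Rpower t (k - INR J)) by (unfold Rpower; apply exp_pos).
        assert (Rpower t (k - INR J) * b <= Rpower t (k - INR J) * (b + 1)) by nra.
        assert (Rpower t (k - INR J) * (b + 1) < eps / 2 / (b + 1) * (b + 1)) by
          (apply Rmult_lt_compat_r; lra).
        replace (eps / 2 / (b + 1) * (b + 1)) with (eps / 2) in H1 by (field; lra). lra. }
      lra. }
    assert (Multi : exists N, forall n, (N <= n)%nat -> forall Rn,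
       is_resolvent E D A (lam n) Rn -> forall i, In i L -> sn i (vsub E x (vscal (lam n) (Rn x))) < eps).
    { induction L as [|i L IH].
      - exists 0%nat. intros n _ Rn _ i [].
      - destruct IH as [N2 HN2]. destruct (Single i) as [N1 HN1].
        exists (Nat.max N1 N2). intros n Hn Rn HR j [<-|Hj].
        + apply (HN1 n ltac:(lia) Rn HR).
        + apply (HN2 n ltac:(lia) Rn HR j Hj). }
    destruct Multi as [N HN]. destruct (Hrho N) as [Rn [HR _]].
    exists (vscal (lam N) (Rn x)). split.
    - apply dom_scal; [exact HAlin|]. apply (Rdom E D A HAlin (lam N) Rn HR m x Hx).
    - intros i Hi. apply (HN N (le_n _) Rn HR i Hi). }
  split.
  - exists (S J). exact HS.
  - exists (S J). split; auto. rewrite S_INR, HJ. lra.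
Qed.
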